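(* Let $\mathcal{A}=\{A_1,\dots,A_m\}$ be a bimodal collection of pairwise disjoint nonempty subsets of a finite abelian group $G$, with internal difference groups $H_1,\dots,H_m$, such that $|A_1|<|H_1|$ and $|A_i|=|H_i|$ for all $2\le i\le m$. Let $D=H_2+H_3+\dots+H_m$, and suppose $\mathcal{A}$ is in canonical position, i.e. $A_1\subseteq H_1$ and $D\subseteq H_1\setminus A_1$. Then: (1) $A_1\subseteq H_1\setminus D$ and $A_1$ is a union of cosets of $D$; (2) each $A_i$ with $2\le i\le m$ is a coset of $H_i$, and $A_2,\dots,A_m$ arise from a subdivision of cosets of $H_1$, i.e. $A_2\cup\dots\cup A_m$ is a union of cosets of $H_1$ and each $A_i$ ($i\ge2$) is contained in a single coset of $H_1$.
   Context: $G$ is written additively. The internal difference group $H_i$ of $A_i$ is the subgroup generated by all $x-y$ with $x,y\in A_i$; $A_i$ lies in a single coset of $H_i$ and $|A_i|\le|H_i|$. A collection $\{A_1,\dots,A_m\}$ of pairwise disjoint subsets of $G$ is bimodal if for every $i$ and every $\delta\in G\setminus\{0\}$, the number $N_i(\delta)$ of pairs $(a,b)$ with $a\in A_i$, $b\in A_j$ for some $j\neq i$, and $a-b=\delta$, satisfies $N_i(\delta)\in\{0,|A_i|\}$. An empty sum of subgroups is $\{0\}$. *)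

(* Defs.v *)
From mathcomp Require Import all_boot all_order all_algebra.
Set Implicit Arguments. Unset Strict Implicit. Unset Printing Implicit Defensive.
Import GRing.Theory.
Local Open Scope ring_scope.

Section Defs.
Variable G : finZmodType.

Definition is_subgroup (S : {set G}) : bool :=
  (0 \in S) && [forall x in S, forall y in S, (x - y) \in S].

Definition gen_subgroup (S : {set G}) : {set G} :=
  \bigcap_(K : {set G} | is_subgroup K && (S \subset K)) K.

Definition diff_group (A : {set G}) : {set G} :=
  gen_subgroup [set x - y | x in A, y in A].

Definition sumset (A B : {set G}) : {set G} := [set a + b | a in A, b in B].

Definition coset (x : G) (H : {set G}) : {set G} := [set x + h | h in H].

(* Family indexed 1..m, A : nat -> {set G}. *)
Definition Ncount (m : nat) (A : nat -> {set G}) (i : nat) (delta : G) : nat :=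
  #|[set p : G * G | (p.1 \in A i)
        && [exists j : 'I_m.+1, (1 <= j)%N && (j != i :> nat) && (p.2 \in A j)]
        && (p.1 - p.2 == delta)]|.

Definition bimodal (m : nat) (A : nat -> {set G}) : Prop :=
  forall i : nat, (1 <= i <= m)%N -> forall delta : G, delta != 0 ->
    Ncount m A i delta = 0%N \/ Ncount m A i delta = #|A i|.

End Defs.

(* Main.v *)
Require Import Defs.
From mathcomp Require Import all_boot all_order all_algebra.
Import GRing.Theory.
Local Open Scope ring_scope.

Section Aux.
Variable G : finZmodType.

Lemma gen_sub0 (S : {set G}) : (0 : G) \in gen_subgroup S.
Proof. by apply/bigcapP => K /andP[/andP[]]. Qed.

Lemma sub_gen (S : {set G}) : S \subset gen_subgroup S.
Proof.
apply/subsetP => x xS; apply/bigcapP => K /andP[_ /subsetP]; exact.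
Qed.

Lemma gen_inv (S X : {set G}) :
  (forall s, s \in X -> forall y, y \in S -> y + s \in S) ->
  forall h, h \in gen_subgroup X -> forall y, y \in S -> y + h \in S.
Proof.
move=> HX.
set K := [set g | [forall y in S, y + g \in S]].
have KP g : g \in K -> forall y, y \in S -> y + g \in S.
  by rewrite inE => /forall_inP.
have Kneg g : g \in K -> forall y, y \in S -> y - g \in S.
  move=> gK y yS.
  have sub : [set z + g | z in S] \subset S.
    by apply/subsetP => z /imsetP[w wS ->]; apply: KP.
  have eqS : [set z + g | z in S] = S.
    by apply/eqP; rewrite eqEcard sub (card_imset _ (addIr g)) leqnn.
  have : y \in [set z + g | z in S] by rewrite eqS.
  by case/imsetP => w wS ->; rewrite addrK.
have subK : is_subgroup K.
  apply/andP; split.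
    by rewrite inE; apply/forall_inP => y yS; rewrite addr0.
  apply/forall_inP => x xK; apply/forall_inP => z zK.
  rewrite inE; apply/forall_inP => y yS.
  rewrite addrCA addrC; apply: KP => //; exact: Kneg.
have XK : X \subset K.
  by apply/subsetP => s sX; rewrite inE; apply/forall_inP => y yS; apply: HX.
move=> h hX; apply: KP.
have : gen_subgroup X \subset K by apply: bigcap_inf; rewrite subK XK.
by move/subsetP; apply.
Qed.

End Aux.

Definition inB {G : finZmodType} m (A : nat -> {set G}) (i : nat) (y : G) : bool :=
  [exists j : 'I_m.+1, (1 <= j)%N && (j != i :> nat) && (y \in A j)].

Lemma neqB (G : finZmodType) m (A : nat -> {set G}) i a y :
  (forall i j : nat, (1 <= i <= m)%N -> (1 <= j <= m)%N -> i <> j ->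
     [disjoint A i & A j]) ->
  (1 <= i <= m)%N -> a \in A i -> inB m A i y -> a != y.
Proof.
move=> dis im aA /existsP[j /andP[/andP[j1 ji] yA]].
apply/eqP => ay; subst y.
have jm : (1 <= j <= m)%N by rewrite j1 -ltnS ltn_ord.
have ij : i <> j by move=> e; rewrite e eqxx in ji.
have := disjointFr (dis _ _ im jm ij) aA.
by rewrite yA.
Qed.

Lemma fill (G : finZmodType) m (A : nat -> {set G}) i a' y a :
  bimodal m A -> (1 <= i <= m)%N -> a' \in A i -> inB m A i y -> a' != y ->
  a \in A i -> inB m A i (a - a' + y).
Proof.
move=> bim im a'A yB ne aA.
set d := a' - y.
have d0 : d != 0 by rewrite /d subr_eq0.
set P := [set p : G * G | (p.1 \in A i) && inB m A i p.2 && (p.1 - p.2 == d)].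
have PN : Ncount m A i d = #|P| by [].
have inP : (a', y) \in P by rewrite inE /= a'A yB eqxx.
have cP : #|P| = #|A i|.
  case: (bim i im d d0); rewrite PN // => c0.
  by move: (card0_eq c0 (a', y)); rewrite inP.
have sub : [set p.1 | p in P] \subset A i.
  by apply/subsetP => x /imsetP[p]; rewrite inE => /andP[/andP[? _] _] ->.
have inj : {in P &, injective (fun p : G * G => p.1)}.
  move=> [p1 p2] [q1 q2]; rewrite !inE /= => /andP[_ /eqP e1] /andP[_ /eqP e2] e.
  simpl in e; subst q1.
  have : p2 = q2.
    by move: e1; rewrite -e2 => /addrI /oppr_inj.
  by move ->.
have eqI : [set p.1 | p in P] = A i.
  by apply/eqP; rewrite eqEcard sub card_in_imset // cP leqnn.
have : a \in [set p.1 | p in P] by rewrite eqI.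
case/imsetP => [[p1 p2]]; rewrite inE /= => /andP[/andP[_ B2] /eqP e] ->.
have -> : p1 - a' + y = p2; last by [].
have e' : p2 = p1 - d by rewrite -e opprB addrC subrK.
by rewrite e' /d opprB -addrA (addrC (-a')).
Qed.

Section Big.
Variable G : finZmodType.
Implicit Types (F : nat -> {set G}) (r : seq nat).

Lemma big0 F r : (forall j, j \in r -> (0:G) \in F j) ->
  (0:G) \in \big[@sumset G/[set 0]]_(j <- r) F j.
Proof.
elim: r => [|k r IH] H; first by rewrite big_nil inE.
rewrite big_cons; apply/imset2P; exists 0 0; rewrite ?addr0 //.
  by apply: H; rewrite inE eqxx.
by apply: IH => j jr; apply: H; rewrite inE jr orbT.
Qed.

Lemma bigsub F r i : (forall j, j \in r -> (0:G) \in F j) -> i \in r ->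
  F i \subset \big[@sumset G/[set 0]]_(j <- r) F j.
Proof.
elim: r => [|k r IH] H //; rewrite inE big_cons => /orP[/eqP ->|ir].
  apply/subsetP => x xF; apply/imset2P; exists x 0; rewrite ?addr0 //.
  by apply: big0 => j jr; apply: H; rewrite inE jr orbT.
have H' : forall j, j \in r -> (0:G) \in F j by move=> j jr; apply: H; rewrite inE jr orbT.
apply/subsetP => x /(subsetP (IH H' ir)) xb; apply/imset2P; exists 0 x; rewrite ?add0r //.
by apply: H; rewrite inE eqxx.
Qed.

Lemma bigind (S : {set G}) F r :
  (forall j, j \in r -> forall d, d \in F j -> forall a, a \in S -> a + d \in S) ->
  forall d, d \in \big[@sumset G/[set 0]]_(j <- r) F j -> forall a, a \in S -> a + d \in S.
Proof.
elim: r => [|k r IH] H d.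
  by rewrite big_nil inE => /eqP -> a; rewrite addr0.
rewrite big_cons => /imset2P[x y xF yB ->] a aS.
rewrite addrA; apply: (IH _ y yB).
  by move=> j jr; apply: H; rewrite inE jr orbT.
by apply: (H k) => //; rewrite inE eqxx.
Qed.

Lemma bigcup_seqE (A : nat -> {set G}) r y :
  (y \in \bigcup_(j <- r) A j) = has (fun j => y \in A j) r.
Proof.
elim: r => [|k r IH]; first by rewrite big_nil inE.
by rewrite big_cons inE IH.
Qed.

End Big.

Arguments fill {G m A i a' y a}.
Arguments neqB {G m A i a y}.

Lemma gen_opp (G : finZmodType) (S : {set G}) d :
  d \in gen_subgroup S -> - d \in gen_subgroup S.
Proof.
move/bigcapP => Hd; apply/bigcapP => K KP.
have := Hd K KP; case/andP: KP => /andP[K0 /forall_inP KB] _ dK.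
have := KB _ K0 => /forall_inP /(_ _ dK); by rewrite sub0r.
Qed.

Lemma coset_of (G : finZmodType) (B : {set G}) x :
  x \in B -> #|B| = #|diff_group B| -> B = coset x (diff_group B).
Proof.
move=> xB cB.
have sub : B \subset coset x (diff_group B).
  apply/subsetP => a aB; apply/imsetP; exists (a - x); last by rewrite addrC subrK.
  apply: (subsetP (@sub_gen _ _)); exact: imset2_f.
apply/eqP; rewrite eqEcard sub /coset (card_imset _ (addrI x)) cB leqnn.
by [].
Qed.

Theorem theorem3p15 (G : finZmodType) (m : nat) (A : nat -> {set G}) :
  (1 <= m)%N ->
  (* pairwise disjoint *)
  (forall i j : nat, (1 <= i <= m)%N -> (1 <= j <= m)%N -> i <> j ->
     [disjoint A i & A j]) ->
  (* nonempty *)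
  (forall i : nat, (1 <= i <= m)%N -> A i != set0) ->
  bimodal m A ->
  (#|A 1%N| < #|diff_group (A 1%N)|)%N ->
  (forall i : nat, (2 <= i <= m)%N -> #|A i| = #|diff_group (A i)|) ->
  (* canonical position, with D = H_2 + ... + H_m *)
  let D := \big[@sumset G/[set 0]]_(2 <= i < m.+1) diff_group (A i) in
  A 1%N \subset diff_group (A 1%N) ->
  D \subset diff_group (A 1%N) :\: A 1%N ->
  ((A 1%N \subset diff_group (A 1%N) :\: D)
   /\ (exists X : {set G}, A 1%N = \bigcup_(x in X) coset x D))
  /\ ((forall i : nat, (2 <= i <= m)%N ->
         exists x : G, A i = coset x (diff_group (A i)))
      /\ (exists X : {set G},
            \bigcup_(2 <= i < m.+1) A i = \bigcup_(x in X) coset x (diff_group (A 1%N)))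
      /\ (forall i : nat, (2 <= i <= m)%N ->
            exists x : G, A i \subset coset x (diff_group (A 1%N)))).
Proof.
move=> m1 dis ne bim c1 ci D A1H DH.
have im1 : (1 <= 1 <= m)%N by rewrite m1.
have iim i : (2 <= i <= m)%N -> (1 <= i <= m)%N.
  by case/andP => i2 im; rewrite im andbT ltnW.
have inB_iff y : inB m A 1 y = has (fun j => y \in A j) (index_iota 2 m.+1).
  apply/existsP/hasP.
    case=> j /andP[/andP[j1 jn] yA]; exists (nat_of_ord j) => //.
    by rewrite mem_index_iota ltn_ord andbT ltn_neqAle eq_sym jn j1.
  case=> k; rewrite mem_index_iota => /andP[k2 km] yA.
  exists (Ordinal km) => /=; rewrite yA andbT (ltnW k2) /=.
  by rewrite neq_ltn k2 orbT.
have cos i : (2 <= i <= m)%N -> exists2 x, x \in A i & A i = coset x (diff_group (A i)).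
  move=> i2; case/set0Pn: (ne i (iim i i2)) => x xA.
  by exists x => //; apply: coset_of => //; apply: ci.
have Binv i : (2 <= i <= m)%N -> forall y h, inB m A i y ->
    h \in diff_group (A i) -> inB m A i (y + h).
  move=> i2 y h yB hH; case: (cos i i2) => x xA eA.
  have xh : x + h \in A i by rewrite eA; apply/imsetP; exists h; rewrite -?eA.
  have := fill bim (iim i i2) xA yB (neqB dis (iim i i2) xA yB) xh.
  by rewrite (addrC x h) addrK addrC.
have B1inv y h : inB m A 1 y -> h \in diff_group (A 1%N) -> inB m A 1 (y + h).
  move=> yB hH.
  have := @gen_inv G [set y | inB m A 1 y] [set x - y | x in A 1%N, y in A 1%N] _ h hH y.
  rewrite !inE; apply => //.
  move=> s /imset2P[a a' aA a'A ->] y'; rewrite !inE => y'B.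
  rewrite addrC; exact: fill bim im1 a'A y'B (neqB dis im1 a'A y'B) aA.
have r0 : forall j, j \in index_iota 2 m.+1 -> (0:G) \in diff_group (A j).
  by move=> j _; apply: gen_sub0.
have HiD i : (2 <= i <= m)%N -> diff_group (A i) \subset D.
  by move=> i2; apply: bigsub => //; rewrite mem_index_iota ltnS.
have DH1 : D \subset diff_group (A 1%N).
  by apply/subsetP => x /(subsetP DH); rewrite inE => /andP[].
have A1inv : forall d, d \in D -> forall a, a \in A 1%N -> a + d \in A 1%N.
  apply: bigind => j; rewrite mem_index_iota ltnS => j2 d dH a aA.
  have aB : inB m A j a.
    apply/existsP; exists (Ordinal (m1 : (1 < m.+1)%N)) => /=.
    by rewrite aA andbT /= neq_ltn (proj1 (andP j2)).
  case/existsP: (Binv j (j2) a d aB dH) => k /andP[/andP[k1 kj] yA].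
  have [k1e|kn1] := eqVneq (nat_of_ord k) 1%N; first by rewrite -k1e.
  have B1 : inB m A 1 (a + d).
    by apply/existsP; exists k; rewrite k1 kn1 yA.
  have dH1 : - d \in diff_group (A 1%N).
    by apply: gen_opp; apply: (subsetP DH1); apply: (subsetP (HiD j j2)).
  have := B1inv _ _ B1 dH1; rewrite addrK => aB1.
  by have := neqB dis im1 aA aB1; rewrite eqxx.
have D0 : (0:G) \in D by apply: big0.
split; [split|split; [|split]].
- apply/subsetP => a aA; rewrite inE (subsetP A1H) // andbT.
  apply/negP => aD; have := subsetP DH a aD; by rewrite inE aA.
- exists (A 1%N); apply/setP => y; apply/idP/bigcupP.
    by move=> yA; exists y => //; apply/imsetP; exists 0; rewrite ?addr0.
  by case=> x xA /imsetP[d dD ->]; apply: A1inv.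
- by move=> i i2; case: (cos i i2) => x _ e; exists x.
- exists [set y | inB m A 1 y]; apply/setP => y.
  rewrite bigcup_seqE -inB_iff; apply/idP/bigcupP.
    move=> yB; exists y; first by rewrite inE.
    by apply/imsetP; exists 0; rewrite ?addr0 //; apply: gen_sub0.
  by case=> x; rewrite inE => xB /imsetP[h hH ->]; apply: B1inv.
- move=> i i2; case: (cos i i2) => x _ e; exists x; rewrite {1}e.
  apply/subsetP => z /imsetP[h hH ->]; apply/imsetP; exists h => //.
  by apply: (subsetP DH1); apply: (subsetP (HiD i i2)).
Qed.
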